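(* Let $D$ be an Eulerian digraph (finite, without loops, parallel arcs or digons) which admits at least one simple dicycle intersection graph. Then $$\sum_{v\in V(D)}|N^{+2}(v)|\;\geq\;\sum_{v\in V(D)}|N^{+}(v)|.$$
   Context: All digraphs are finite, with no loops, no parallel arcs and no digons (a digon is a pair of arcs $u\to w$, $w\to u$). $N^{+}(v)$ is the set of out-neighbours of $v$; $N^{+2}(v)$ is the set of vertices $w\notin N^{+}(v)\cup\{v\}$ such that $u\to w$ is an arc for some $u\in N^{+}(v)$. An Eulerian digraph is a (weakly) connected digraph with a closed directed trail using every arc exactly once; equivalently a connected digraph with $d^{+}(v)=d^{-}(v)$ for all $v$. A cycle decomposition is a set of dicycles whose arc sets partition $A(D)$. The dicycle intersection graph associated with a cycle decomposition $\mathcal{F}$ is the multigraph with vertex set $\mathcal{F}$ having, for each pair of distinct dicycles $C,C'\in\mathcal{F}$ and each vertex lying on both, one edge between $C$ and $C'$. $D$ admits a simple dicycle intersection graph if for some cycle decomposition this multigraph has no parallel edges (equivalently, any two distinct dicycles of the decomposition share at most one vertex). *)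

(* Defs.v *)
(* A digraph on a finite vertex type T is an arc relation
   e : rel T (so parallel arcs are impossible by construction). *)
From mathcomp Require Import all_boot.
Set Implicit Arguments. Unset Strict Implicit. Unset Printing Implicit Defensive.

Section Digraph.
Variable T : finType.
Variable e : rel T.

Definition simple_digraph : Prop :=
  (forall x, ~~ e x x) /\ (forall x y, e x y -> ~~ e y x).

Definition outN (v : T) : {set T} := [set w | e v w].
Definition inN (v : T) : {set T} := [set w | e w v].

Definition outN2 (v : T) : {set T} :=
  [set w | (w != v) && ~~ e v w && [exists u, e v u && e u w]].

Definition weakly_connected : Prop :=
  forall x y, connect (fun a b => e a b || e b a) x y.

Definition eulerian : Prop :=
  weakly_connected /\ forall v, #|outN v| = #|inN v|.

(* a dicycle, given by its cyclic vertex sequence (distinct vertices,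
   consecutive ones joined by arcs, last one joined to the first) *)
Definition dicycle (c : seq T) : bool :=
  [&& uniq c, 2 <= size c & cycle e c].

Definition cyc_arc (c : seq T) (x y : T) : bool :=
  (x \in c) && (next c x == y).

Definition cycle_decomposition (F : seq (seq T)) : Prop :=
  (forall c, c \in F -> dicycle c) /\
  (forall x y, e x y -> count (fun c => cyc_arc c x y) F = 1).

(* the dicycle intersection graph of F has no parallel edges:
   distinct dicycles of F share at most one vertex *)
Definition simple_intersection (F : seq (seq T)) : Prop :=
  forall i j, i < size F -> j < size F -> i != j ->
    #|[pred v | (v \in nth [::] F i) && (v \in nth [::] F j)]| <= 1.

Definition admits_simple_dicycle_intersection_graph : Prop :=
  exists F, cycle_decomposition F /\ simple_intersection F.

End Digraph.

(* Main.v *)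
Require Import Defs.
From mathcomp Require Import all_boot.
Set Implicit Arguments. Unset Strict Implicit.

Lemma two_le_card (T : finType) (P : pred T) a b :
  a != b -> P a -> P b -> 1 < #|P|.
Proof.
move=> ab Pa Pb; rewrite (cardD1 a) [a \in P]Pa add1n ltnS.
rewrite (cardD1 b) !inE eq_sym ab /=; rewrite [b \in P]Pb; by [].
Qed.

Section Main.
Variables (T : finType) (e : rel T) (F : seq (seq T)).
Hypothesis noloop : forall x, ~~ e x x.
Hypothesis nodigon : forall x y, e x y -> ~~ e y x.
Hypothesis Fcyc : forall c, c \in F -> dicycle e c.
Hypothesis Fcnt : forall x y, e x y -> count (fun c => cyc_arc c x y) F = 1.
Hypothesis Fsimp : simple_intersection F.

Definition idx u v := find (fun c => cyc_arc c u v) F.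
Definition cyc u v := nth [::] F (idx u v).

Lemma has_arc u v : e u v -> has (fun c => cyc_arc c u v) F.
Proof. by move=> h; rewrite has_count Fcnt. Qed.

Lemma idx_lt u v : e u v -> idx u v < size F.
Proof. by move=> h; rewrite /idx -has_find has_arc. Qed.

Lemma cyc_in u v : e u v -> cyc u v \in F.
Proof. by move=> h; apply: mem_nth; apply: idx_lt. Qed.

Lemma cyc_ok u v : e u v -> (u \in cyc u v) /\ next (cyc u v) u = v.
Proof.
move=> h; have := nth_find [::] (has_arc h); rewrite /cyc_arc => /andP[a /eqP b].
by split.
Qed.

Lemma no_two u w i j : i < size F -> j < size F -> i != j -> u != w ->
  u \in nth [::] F i -> w \in nth [::] F i ->
  u \in nth [::] F j -> w \in nth [::] F j -> False.
Proof.
move=> hi hj ij uw u1 w1 u2 w2.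
have := Fsimp hi hj ij.
have := @two_le_card T [pred v | (v \in nth [::] F i) && (v \in nth [::] F j)] u w uw.
rewrite /= u1 w1 u2 w2 => /(_ erefl erefl) h1 h2.
by have := leq_trans h1 h2.
Qed.

Definition fw u v := next (cyc u v) v.

Lemma fw_props u v : e u v ->
  [/\ e v (fw u v), fw u v != u, v \in cyc u v & fw u v \in cyc u v].
Proof.
move=> h; have [uc nu] := cyc_ok h.
have /and3P[_ _ cy] := Fcyc (cyc_in h).
have vc : v \in cyc u v by have := mem_next (cyc u v) u; rewrite nu uc.
have evw := next_cycle cy vc.
split => //; last by rewrite /fw mem_next.
apply/negP => /eqP E; move: evw; rewrite -/(fw u v) E => evu.
by move: (nodigon h); rewrite evu.
Qed.

Lemma fw_in u v : e u v -> fw u v \in outN2 e u.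
Proof.
move=> h; have [evw wu vc wc] := fw_props h.
rewrite inE wu /=; apply/andP; split; last by apply/existsP; exists v; rewrite h.
apply/negP => euw.
have [uc nu] := cyc_ok h.
have [uc' nu'] := cyc_ok euw.
have uw : u != fw u v by apply/negP => /eqP E; move: (noloop u); rewrite {2}E euw.
case: (eqVneq (idx u v) (idx u (fw u v))) => E.
  have : v = fw u v by rewrite -[RHS]nu' -[LHS]nu /cyc E.
  move=> vw; move: (noloop v); rewrite {2}vw evw; by [].
apply: (no_two (idx_lt h) (idx_lt euw) E uw) => //.
by have := mem_next (cyc u (fw u v)) u; rewrite nu' uc'.
Qed.

Lemma fw_inj u : {in outN e u &, injective (fw u)}.
Proof.
move=> v1 v2; rewrite !inE => h1 h2 E.
have [_ wu _ wc1] := fw_props h1.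
have [_ _ _ wc2] := fw_props h2.
have [uc1 n1] := cyc_ok h1.
have [uc2 n2] := cyc_ok h2.
case: (eqVneq (idx u v1) (idx u v2)) => I.
  by rewrite -[LHS]n1 -[RHS]n2 /cyc I.
exfalso; apply: (no_two (idx_lt h1) (idx_lt h2) I (u := u) (w := fw u v1)) => //.
- by rewrite eq_sym.
- by rewrite E.
Qed.

Lemma per_vertex u : #|outN e u| <= #|outN2 e u|.
Proof.
rewrite -(card_in_imset (@fw_inj u)); apply: subset_leq_card.
apply/subsetP => w /imsetP[v]; rewrite inE => h ->; exact: fw_in.
Qed.
End Main.

Theorem corollary2p2 (T : finType) (e : rel T) :
  simple_digraph e -> eulerian e ->
  admits_simple_dicycle_intersection_graph e ->
  \sum_(v : T) #|outN e v| <= \sum_(v : T) #|outN2 e v|.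
Proof.
move=> [nl nd] _ [F [[Fc Fn] Fs]].
apply: leq_sum => v _; exact: (per_vertex nl nd Fc Fn Fs).
Qed.
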